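(* Let $W_\Gamma$ be a graph product on a finite graph $\Gamma=(V,E)$ with every vertex group primary or infinite cyclic, and assume no vertex $v\in V$ satisfies $st(v)=V$. Suppose $V=V_1\sqcup V_2$ with $V_1,V_2$ non-empty and the natural map $W_{\Gamma_{V_1}}\times W_{\Gamma_{V_2}}\to W_\Gamma$ is an isomorphism. Then both $V_1$ and $V_2$ are lower cones with respect to $\le_\tau$.
   Context: Graph: $\Gamma=(V,E)$, $V$ non-empty finite, $E$ a set of 2-element subsets; $lk(v)=\{x:\{v,x\}\in E\}$, $st(v)=lk(v)\cup\{v\}$; $W_{\Gamma_X}$ the subgroup generated by $G_v$, $v\in X$ (the graph product on the full subgraph spanned by $X$). A group is primary if cyclic of order $p^k$, $p$ prime, $k\ge1$. Relation $\le_\tau$ on $V$: $v\le_\tau v$; for $v\neq w$, $v\le_\tau w$ iff either (a) $|G_v|=\infty$ and $lk(v)\subset st(w)$, or (b) $|G_v|=p^k$, $|G_w|=p^\ell$ for the same prime $p$ and $st(v)\subset st(w)$. $X\subset V$ is a lower cone if $t\in X$, $s\in V$, $s\le_\tau t$ imply $s\in X$. *)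

(* Defs.v *)
From mathcomp Require Import all_boot all_order all_algebra.
Set Implicit Arguments. Unset Strict Implicit. Unset Printing Implicit Defensive.

(* Vertex groups are cyclic: the vertex
   group G_v is Z/(ord v) when ord v > 0 and Z (infinite cyclic) when
   ord v = 0.  *)

Section GraphProduct.
Variables (V : finType) (adj : rel V) (ord : V -> nat).

Definition simple_graph : Prop :=
  (forall x y, adj x y = adj y x) /\ (forall x, ~~ adj x x).

Definition lk (v : V) : {set V} := [set x | adj v x].
Definition st (v : V) : {set V} := v |: lk v.

Definition primary_order (n : nat) : Prop :=
  exists p k, prime p /\ (0 < k)%N /\ n = (p ^ k)%N.

Definition primary_or_Z : Prop :=
  forall v, ord v = 0%N \/ primary_order (ord v).

(* Words in the generators of the graph product: a letter (v, z) denotes the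
   element z (i.e. the z-th power of the canonical generator) of G_v. *)
Definition letter := (V * int)%type.
Definition word := seq letter.

Local Open Scope ring_scope.

Inductive wrel : word -> word -> Prop :=
| wrel_mul v (a b : int) : wrel [:: (v, a); (v, b)] [:: (v, a + b)]
| wrel_triv v (a : int) : ((ord v)%:Z %| a)%Z -> wrel [:: (v, a)] [::]
| wrel_comm v w (a b : int) : adj v w -> wrel [:: (v, a); (w, b)] [:: (w, b); (v, a)].

Inductive weq : word -> word -> Prop :=
| weq_refl w : weq w w
| weq_sym w1 w2 : weq w1 w2 -> weq w2 w1
| weq_trans w1 w2 w3 : weq w1 w2 -> weq w2 w3 -> weq w1 w3
| weq_ctx u x y w : wrel x y -> weq (u ++ x ++ w) (u ++ y ++ w).

(* Words representing elements of the subgroup W_{Gamma_X} generated by the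
   G_v, v in X. *)
Definition word_in (X : {set V}) (w : word) : bool := all (fun l => l.1 \in X) w.

(* The natural map W_{Gamma_X1} x W_{Gamma_X2} -> W_Gamma, (a, b) |-> a b,
   is an isomorphism of groups: a homomorphism, injective and surjective. *)
Definition natural_map_iso (X1 X2 : {set V}) : Prop :=
  [/\ (forall a a' b b', word_in X1 a -> word_in X1 a' ->
         word_in X2 b -> word_in X2 b' ->
         weq ((a ++ a') ++ (b ++ b')) ((a ++ b) ++ (a' ++ b'))),
      (forall a a' b b', word_in X1 a -> word_in X1 a' ->
         word_in X2 b -> word_in X2 b' ->
         weq (a ++ b) (a' ++ b') -> weq a a' /\ weq b b')
    & (forall w, exists a b, [/\ word_in X1 a, word_in X2 b & weq w (a ++ b)])].

Definition le_tau (v w : V) : Prop :=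
  v = w \/
  (v <> w /\
   ((ord v = 0%N /\ lk v \subset st w) \/
    ((exists p k l, [/\ prime p, (0 < k)%N, (0 < l)%N,
                       ord v = (p ^ k)%N & ord w = (p ^ l)%N])
     /\ st v \subset st w))).

Definition lower_cone (X : {set V}) : Prop :=
  forall t s, t \in X -> le_tau s t -> s \in X.

End GraphProduct.

(* Main.v *)
Require Import Defs.
From mathcomp Require Import all_boot all_order all_algebra.
From mathcomp Require Import zify ring lra.
Import Order.TTheory GRing.Theory Num.Theory.

Section Aux.
Local Open Scope ring_scope.

Definition rot (c n a i : int) : int :=
  if (c <= i) && (i < c + n) then c + ((i - c + a) %% n)%Z else i.

Lemma rot_add c n a b i : 0 < n -> rot c n b (rot c n a i) = rot c n (a + b) i.
Proof.
move=> n0; rewrite /rot.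
case h: ((c <= i) && (i < c + n)); last by rewrite h.
move/andP: h => [h1 h2].
have g0 : 0 <= ((i - c + a) %% n)%Z by apply: modz_ge0; lia.
have g1 := ltz_pmod (i - c + a) n0.
have -> : (c <= c + ((i - c + a) %% n)%Z) && (c + ((i - c + a) %% n)%Z < c + n).
  by apply/andP; split; lia.
congr (_ + _).
have -> : c + ((i - c + a) %% n)%Z - c = ((i - c + a) %% n)%Z by ring.
by rewrite modzDml addrA.
Qed.

Lemma rot_triv c n a i : 0 < n -> (n %| a)%Z -> rot c n a i = i.
Proof.
move=> n0 /dvdz_mod0P ha; rewrite /rot.
case h: ((c <= i) && (i < c + n)) => //.
move/andP: h => [h1 h2].
rewrite -modzDmr ha addr0 modz_small; first by ring.
apply/andP; split; lia.
Qed.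

Lemma rot_out c n a i : ~~ ((c <= i) && (i < c + n)) -> rot c n a i = i.
Proof. by rewrite /rot => /negbTE ->. Qed.

End Aux.

Section Model.
Variables (V : finType) (adj : rel V) (ord : V -> nat) (v1 v2 : V).
Local Open Scope ring_scope.

Definition m' : int := if ord v1 == 0%N then 2 else (ord v1)%:Z.
Definition n' : int := if ord v2 == 0%N then 2 else (ord v2)%:Z.
Definition cc : int := m' - 1.

Definition f (l : letter V) (i : int) : int :=
  if l.1 == v1 then rot 0 m' l.2 i
  else if l.1 == v2 then rot cc n' l.2 i else i.

Fixpoint act (w : word V) (i : int) : int :=
  if w is l :: w' then act w' (f l i) else i.

Lemma act_cat w1 w2 i : act (w1 ++ w2) i = act w2 (act w1 i).
Proof. by elim: w1 i => //= l w IH i. Qed.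

Lemma m'_gt0 : 0 < m'. Proof. rewrite /m'; case: eqP => //; lia. Qed.
Lemma n'_gt0 : 0 < n'. Proof. rewrite /n'; case: eqP => //; lia. Qed.

Lemma f_add v a b i : f (v, b) (f (v, a) i) = f (v, a + b) i.
Proof.
rewrite /f /=; case: eqP => _; first exact: rot_add m'_gt0.
by case: eqP => // _; apply: rot_add n'_gt0.
Qed.

Lemma f_triv v a i : ((ord v)%:Z %| a)%Z -> f (v, a) i = i.
Proof.
move=> h; rewrite /f /=.
have key : forall (o : nat) (k : int), k = (if o == 0%N then 2 else o%:Z) ->
    (o%:Z %| a)%Z -> (k %| a)%Z.
  move=> o k -> ho; case: eqP => [o0|//].
  by move: ho; rewrite o0 dvd0z => /eqP ->; rewrite dvdz0.
case: eqP => [ev|_]; first by subst v; apply: rot_triv m'_gt0 (key _ _ erefl h).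
case: eqP => [ev|//]; by subst v; apply: rot_triv n'_gt0 (key _ _ erefl h).
Qed.

Hypothesis nadj : ~~ adj v1 v2.
Hypothesis sym : forall x y, adj x y = adj y x.
Hypothesis irr : forall x, ~~ adj x x.

Lemma f_comm v w a b i : adj v w -> f (w, b) (f (v, a) i) = f (v, a) (f (w, b) i).
Proof.
move=> hvw; rewrite /f /=.
case: (v =P v1) => [ev|nv]; case: (w =P v1) => [ew|nw].
- by move: hvw; rewrite ev ew (negbTE (irr _)).
- case: (w =P v2) => [ew2|//]. by move: hvw nadj; rewrite ev ew2 => ->.
- case: (v =P v2) => [ev2|//]. by move: hvw nadj; rewrite ev2 ew sym => ->.
- case: (v =P v2) => [ev2|nv2]; case: (w =P v2) => [ew2|nw2] //.
  by move: hvw; rewrite ev2 ew2 (negbTE (irr _)).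
Qed.

Lemma weq_act w1 w2 : weq adj ord w1 w2 -> forall i, act w1 i = act w2 i.
Proof.
elim=> [w|a b h IH|a b c h1 IH1 h2 IH2|u x y w r] i //.
- by rewrite IH1 IH2.
- rewrite !act_cat; congr act.
  case: r => /=.
  + by move=> v a b; rewrite f_add.
  + by move=> v a h; rewrite f_triv.
  + by move=> v w' a b h; rewrite f_comm.
Qed.

Lemma ord_ge2 : primary_or_Z ord -> forall v, ord v = 0%N \/ (2 <= ord v)%N.
Proof.
move=> P v; case: (P v) => [->|[p [k [pp [k0 ->]]]]]; [by left|right].
apply: leq_trans (prime_gt1 pp) _.
rewrite -{1}(expn1 p) leq_pexp2l //; exact: prime_gt0.
Qed.

Lemma no_comm : primary_or_Z ord -> v1 != v2 ->
  ~ weq adj ord [:: (v1, 1); (v2, 1)] [:: (v2, 1); (v1, 1)].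
Proof.
move=> P n12 h; have := @weq_act _ _ h cc.
have hm : 2 <= m' by rewrite /m'; case: eqP => // /eqP o; case: (ord_ge2 P v1) => /eqP; rewrite ?o //; lia.
have hn : 2 <= n' by rewrite /n'; case: eqP => // /eqP o; case: (ord_ge2 P v2) => /eqP; rewrite ?o //; lia.
have n21 : (v2 == v1) = false by rewrite eq_sym; exact: negbTE.
rewrite /= /f /= !eqxx ?n21 ?(negbTE n12) /=.
have e1 : rot 0 m' 1 cc = 0.
  rewrite /rot.
  have -> : (0 <= cc) && (cc < 0 + m') by rewrite /cc; apply/andP; split; lia.
  have -> : cc - 0 + 1 = m' by rewrite /cc; ring.
  by rewrite modzz add0r.
have e2 : rot cc n' 1 0 = 0.
  by apply: rot_out; rewrite /cc; apply/negP; lia.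
have e3 : rot cc n' 1 cc = cc + 1.
  rewrite /rot.
  have -> : (cc <= cc) && (cc < cc + n') by apply/andP; split; lia.
  have -> : cc - cc + 1 = 1 by ring.
  rewrite modz_small //; apply/andP; split; lia.
have e4 : rot 0 m' 1 (cc + 1) = cc + 1.
  by apply: rot_out; rewrite /cc; apply/negP; lia.
rewrite e1 e2 e3 e4 /cc; lia.
Qed.

End Model.

Lemma join_adj (V : finType) (adj : rel V) (ord : V -> nat) (V1 V2 : {set V}) :
  simple_graph adj -> primary_or_Z ord -> V1 :&: V2 = set0 ->
  natural_map_iso adj ord V1 V2 ->
  forall x y, x \in V1 -> y \in V2 -> adj x y.
Proof.
move=> [sym irr] P dis [hom _ _] x y hx hy.
apply/negPn/negP => nadj.
have nxy : x != y.
  apply/eqP => exy; have : x \in V1 :&: V2 by rewrite inE hx exy hy.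
  by rewrite dis inE.
apply: (@no_comm V adj ord x y nadj sym irr P nxy).
have := hom [::] [:: (x, 1%R)] [:: (y, 1%R)] [::] isT.
by rewrite /word_in /= hx hy => /(_ isT isT isT).
Qed.

Lemma cone (V : finType) (adj : rel V) (ord : V -> nat) (X Y : {set V}) :
  simple_graph adj -> (forall v : V, st adj v != [set: V]) ->
  X :&: Y = set0 -> X :|: Y = [set: V] ->
  (forall x y, x \in X -> y \in Y -> adj x y) ->
  lower_cone adj ord X.
Proof.
move=> [sym irr] nst dis cov J t s ht hle.
case: hle => [-> //|[nst' H]].
apply/negPn/negP => hs.
have sY : s \in Y.
  have : s \in X :|: Y by rewrite cov inE.
  by rewrite inE (negbTE hs).
have lks : lk adj s \subset st adj t.
  case: H => [[_ //]|[_ h]]; apply: subset_trans h; exact: subsetUr.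
apply: (elimN eqP (nst t)); apply/setP => z; rewrite in_setT.
have : z \in X :|: Y by rewrite cov inE.
move=> /setUP[zX|zY].
- case: (z =P t) => [->|nzt]; first by rewrite /st !inE eqxx.
  apply: (subsetP lks); rewrite /lk inE sym; exact: J.
- rewrite /st /lk !inE; apply/orP; right; exact: J.
Qed.

Theorem lemma6p6 (V : finType) (adj : rel V) (ord : V -> nat)
  (V1 V2 : {set V}) :
  simple_graph adj ->
  primary_or_Z ord ->
  (forall v : V, st adj v != [set: V]) ->
  V1 :&: V2 = set0 -> V1 :|: V2 = [set: V] ->
  V1 != set0 -> V2 != set0 ->
  natural_map_iso adj ord V1 V2 ->
  lower_cone adj ord V1 /\ lower_cone adj ord V2.
Proof.
move=> G P nst dis cov _ _ iso.
have J := @join_adj V adj ord V1 V2 G P dis iso.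
split.
- exact: (@cone V adj ord V1 V2 G nst dis cov J).
- apply: (@cone V adj ord V2 V1 G nst).
  + by rewrite setIC.
  + by rewrite setUC.
  + move=> x y hx hy; case: G => sym _; rewrite sym; exact: J.
Qed.
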